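(* Let $c>2$ be a constant. Consider random directed graphs $\mathcal{G}_{n,p}$ on $n$ vertices in which each ordered pair $(u,v)$ of distinct vertices is an edge independently with probability $p$, where $p \ge \frac{c\log n}{n}$, together with an arbitrary partition $(V_1,V_P)$ of the vertices into player-1 and probabilistic vertices and an arbitrary nonempty target (B\''uchi) set $B$. Then the expected number of iterations of the classical algorithm for almost-sure winning in MDPs with B\''uchi objective $B$ is $O(1)$ (bounded by a constant independent of $n$ and $p$), and the average case running time of the algorithm is linear in the size of the graph.
   Context: $\log$ denotes the natural logarithm. For $U \subseteq V$ in a graph $G$ with vertex partition $(V_1,V_P)$, the random attractor $\mathrm{Attr}_P(U)$ is $\bigcup_{i\ge 0} X_i$, where $X_0=U$ and $X_{i+1}= X_i \cup \{v\in V_P : E(v)\cap X_i \neq\emptyset\} \cup \{v \in V_1 : E(v)\subseteq X_i\}$, with $E(v)$ the set of out-neighbours of $v$. The classical algorithm for B\''uchi objective $B$ works in iterations: starting from $G^1=G$ with vertex set $V^1$, in iteration $i$ it computes the set $Z^i$ of vertices of $G^i$ with a directed path in $G^i$ to a vertex of $B\cap V^i$, sets $U^i=V^i\setminus Z^i$; if $U^i=\emptyset$ it stops and outputs $Z^i$, otherwise it removes $\mathrm{Attr}_P(U^i)$ (computed in $G^i$) from $G^i$ to get $G^{i+1}$. Each iteration takes time linear in the size of the current graph, and there are at most $n$ iterations. *)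

(* Defs.v *)
From HB Require Import structures.
From mathcomp Require Import all_boot all_order all_algebra.
From mathcomp Require Import all_classical all_reals all_analysis.

Set Implicit Arguments.
Unset Strict Implicit.
Unset Printing Implicit Defensive.

Import Order.TTheory GRing.Theory Num.Theory.
Local Open Scope ring_scope.

Section Algo.
Variable n : nat.
Notation V := 'I_n.
(* E : edge set of the digraph (set of ordered pairs), V1 : player-1
   vertices (V_P is the complement), B : Buchi target set. *)
Variables (E : {set V * V}) (V1 B : {set V}).

Definition sub_edge (S : {set V}) : rel V :=
  fun x y => [&& x \in S, y \in S & (x, y) \in E].

(* Z: vertices of S having a directed path inside S to a vertex of B :&: S
   (the empty path counts) *)
Definition reachB (S : {set V}) : {set V} :=
  [set v in S | [exists b in B :&: S, connect (sub_edge S) v b]].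

Definition attr_step (S X : {set V}) : {set V} :=
  X :|: [set v in S :\: V1 | [exists w in X, sub_edge S v w]]
    :|: [set v in S :&: V1 | [forall w, sub_edge S v w ==> (w \in X)]].

(* Attr_P(U) in the subgraph induced by S; the increasing chain in a set
   with n elements stabilises after at most n steps. *)
Definition attrP (S U : {set V}) : {set V} := iter n.+1 (attr_step S) U.

Definition graph_size (S : {set V}) : nat :=
  #|S| + #|[set e in E | (e.1 \in S) && (e.2 \in S)]|.

(* run of the classical algorithm on the current vertex set S;
   returns (number of iterations, total work = sum of the sizes of the
   graphs G^i over all iterations i). *)
Fixpoint run (fuel : nat) (S : {set V}) : nat * nat :=
  match fuel with
  | 0 => (0, 0)%N
  | k.+1 =>
    let U := S :\: reachB S in
    if U == finset.set0 then (1, graph_size S)%N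
    else let r := run k (S :\: attrP S U) in
         (r.1.+1, r.2 + graph_size S)%N
  end.

(* at most n+1 iterations can occur (each non-final one removes a vertex),
   so fuel n.+2 is enough *)
Definition buchi_iterations : nat := (run n.+2 [set: V]).1.
Definition buchi_work : nat := (run n.+2 [set: V]).2.
End Algo.

Definition offdiag (n : nat) : {set 'I_n * 'I_n} := [set e | e.1 != e.2].

Definition gnp_prob (R : realType) (n : nat) (p : R) (E : {set 'I_n * 'I_n}) : R :=
  p ^+ #|E| * (1 - p) ^+ #|offdiag n :\: E|.

Definition gnp_expect (R : realType) (n : nat) (p : R)
  (f : {set 'I_n * 'I_n} -> R) : R :=
  \sum_(E in powerset (offdiag n)) gnp_prob p E * f E.

(* Main.v *)
Require Import Defs.
From HB Require Import structures.
From mathcomp Require Import all_boot all_order all_algebra.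
From mathcomp Require Import all_classical all_reals all_analysis.
From mathcomp Require Import zify ring lra.
Import Order.TTheory GRing.Theory Num.Theory.
Local Open Scope ring_scope.

Section Comb.
Variable R : realType.
Variable X : finType.

Lemma sum_powU1 (h : {set X} -> R) (a : X) (A : {set X}) : a \notin A ->
  \sum_(E in powerset (a |: A)) h E =
  \sum_(E in powerset A) h E + \sum_(E in powerset A) h (a |: E).
Proof.
move=> aA; rewrite (bigID (fun E : {set X} => a \in E)) /= addrC; congr (_ + _).
  apply: eq_bigl => E; rewrite !powersetE; apply/andP/idP.
    case=> /fintype.subsetP sE aE; apply/fintype.subsetP => x xE.
    have := sE x xE; rewrite in_setU1; case/orP => // /eqP xa.
    by rewrite -xa xE in aE.
  move=> /fintype.subsetP sE; split; last by apply/negP => /sE; rewrite (negbTE aA).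
  by apply/fintype.subsetP => x /sE xA; rewrite in_setU1 xA orbT.
rewrite (reindex_onto (fun E : {set X} => a |: E) (fun E : {set X} => E :\ a)); last first.
  by move=> E /andP[_ aE]; rewrite finset.setD1K.
apply: eq_bigl => E; rewrite !powersetE setU11 andbT.
apply/andP/idP.
  case=> /fintype.subsetP sE /eqP eE; apply/fintype.subsetP => x xE.
  have : x \in a |: E by rewrite in_setU1 xE orbT.
  move/sE; rewrite in_setU1; case/orP => // /eqP xa.
  by move: xE; rewrite -eE xa !inE eqxx.
move=> /fintype.subsetP sE; split.
  apply/fintype.subsetP => x; rewrite !in_setU1; case/orP => [->//|/sE ->]; by rewrite orbT.
apply/eqP/setP => x; rewrite !inE; case: (eqVneq x a) => //= ->.
by apply/esym/negP => /sE; rewrite (negbTE aA).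
Qed.

Lemma set_ind_card (P : {set X} -> Prop) :
  P finset.set0 -> (forall (a : X) (A : {set X}), a \notin A -> P A -> P (a |: A)) -> forall A, P A.
Proof.
move=> P0 PS A; move: {2}#|A| (erefl #|A|) => m; elim: m A => [|m IH] A hA.
  by rewrite (cards0_eq hA).
have : (0 < #|A|)%N by rewrite hA.
rewrite card_gt0 => /set0Pn [a aA].
rewrite -(finset.setD1K aA); apply: PS; first by rewrite !inE eqxx.
apply: IH; move: hA; rewrite (cardsD1 a) aA; lia.
Qed.


Variable p : R.
Implicit Types (A C : {set X}) (h g : {set X} -> R) (a : X) (E : {set X}).
Definition W (A : {set X}) (h : {set X} -> R) :=
  \sum_(E in powerset A) (p ^+ #|E| * (1 - p) ^+ #|A :\: E|) * h E.

Lemma W_ext A h g : (forall E, E \subset A -> h E = g E) -> W A h = W A g.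
Proof. by move=> hg; apply: eq_bigr => E; rewrite powersetE => /hg ->. Qed.

Lemma W_add A h g : W A (fun E => h E + g E) = W A h + W A g.
Proof. by rewrite /W -big_split; apply: eq_bigr => E _; rewrite mulrDr. Qed.

Lemma W_scale A k h : W A (fun E => k * h E) = k * W A h.
Proof. by rewrite /W big_distrr; apply: eq_bigr => E _; rewrite mulrCA. Qed.

Lemma W_sum (I : finType) (P : pred I) A (f : I -> {set X} -> R) :
  W A (fun E => \sum_(i | P i) f i E) = \sum_(i | P i) W A (f i).
Proof.
rewrite /W exchange_big; apply: eq_bigr => E _; rewrite big_distrr //.
Qed.

Lemma W_le A h g : 0 <= p -> p <= 1 -> (forall E, E \subset A -> h E <= g E) ->
  W A h <= W A g.
Proof.
move=> p0 p1 hg; apply: ler_sum => E; rewrite powersetE => /hg hgE.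
apply: ler_wpM2l => //; apply: mulr_ge0; apply: exprn_ge0 => //; lra.
Qed.

Lemma sum_pow (y : R) A : \sum_(E in powerset A) y ^+ #|E| = (1 + y) ^+ #|A|.
Proof.
elim/set_ind_card: A => [|a A aA IH].
  by rewrite powerset0 big_set1 cards0 !expr0.
rewrite sum_powU1 // IH cardsU1 aA /= add1n exprS.
have -> : \sum_(E in powerset A) y ^+ #|a |: E| = y * \sum_(E in powerset A) y ^+ #|E|.
  rewrite big_distrr; apply: eq_bigr => E; rewrite powersetE => sE.
  rewrite cardsU1; have -> : a \notin E by apply/negP => /(fintype.subsetP sE); rewrite (negbTE aA).
  by rewrite add1n exprS.
rewrite IH; ring.
Qed.

Lemma W_step a A h : a \notin A ->
  W (a |: A) h = (1 - p) * W A h + p * W A (fun E => h (a |: E)).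
Proof.
move=> aA; rewrite /W sum_powU1 //; congr (_ + _).
  rewrite big_distrr; apply: eq_bigr => E; rewrite powersetE => sE.
  have sE' : E \subset a |: A.
    by apply/fintype.subsetP => x /(fintype.subsetP sE) xA; rewrite in_setU1 xA orbT.
  rewrite cardsDS // cardsDS // cardsU1 aA /=.
  have hE : (#|E| <= #|A|)%N by apply: subset_leq_card.
  have -> : (1 + #|A| - #|E| = (#|A| - #|E|).+1)%N by lia.
  rewrite exprS; ring.
rewrite big_distrr; apply: eq_bigr => E; rewrite powersetE => sE.
have aE : a \notin E by apply/negP => /(fintype.subsetP sE); rewrite (negbTE aA).
have sE' : a |: E \subset a |: A by rewrite finset.setUS.
rewrite cardsDS // cardsDS // !cardsU1 aA aE /=.
have -> : (1 + #|A| - (1 + #|E|) = #|A| - #|E|)%N by lia.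
rewrite add1n exprS; ring.
Qed.

Lemma W_one A : W A (fun=> 1) = 1.
Proof.
elim/set_ind_card: A => [|a A aA IH].
  by rewrite /W powerset0 big_set1 cards0 finset.setD0 cards0 !expr0 !mulr1.
by rewrite W_step // IH; ring.
Qed.

Lemma W_card A : W A (fun E => #|E|%:R) = p * #|A|%:R.
Proof.
elim/set_ind_card: A => [|a A aA IH].
  rewrite /W powerset0 big_set1 cards0 finset.setD0 cards0 /=; ring.
rewrite W_step // IH.
rewrite (@W_ext A _ (fun E => #|E|%:R + 1)); last first.
  move=> E sE; have aE : a \notin E by apply/negP => /(fintype.subsetP sE); rewrite (negbTE aA).
  by rewrite cardsU1 aE add1n -addn1 natrD.
rewrite W_add IH W_one cardsU1 aA add1n -addn1 natrD; ring.
Qed.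

Lemma W_restrict A C g : C \subset A ->
  W A (fun E => (E :&: C == finset.set0)%:R * g E) = (1 - p) ^+ #|C| * W (A :\: C) g.
Proof.
move=> CA; rewrite /W big_distrr /=.
rewrite (bigID (fun E : {set X} => E :&: C == finset.set0)) /=.
rewrite [X in _ + X]big1 ?addr0; last by move=> E /andP[_ /negbTE ->]; rewrite mul0r mulr0.
have hset : forall E : {set X}, (E \in powerset A) && (E :&: C == finset.set0) = (E \in powerset (A :\: C)).
  move=> E; rewrite !powersetE; apply/andP/idP.
    case=> /fintype.subsetP sE /eqP EC; apply/fintype.subsetP => x xE.
    rewrite inE sE // andbT; apply/negP => xC.
    have : x \in E :&: C by rewrite inE xE.
    by rewrite EC inE.
  move=> /fintype.subsetP sE; split.
    by apply/fintype.subsetP => x /sE; rewrite inE => /andP[].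
  apply/eqP/setP => x; rewrite !inE; apply/negP => /andP[/sE]; rewrite inE => /andP[/negP ? _] //.
rewrite (eq_bigl _ _ hset); apply: eq_bigr => E EP.
have := EP; rewrite -hset => /andP[_ ->]; rewrite mul1r.
move: EP; rewrite powersetE => sE.
have sEA : E \subset A by apply: (fintype.subset_trans sE); apply: finset.subsetDl.
rewrite cardsDS // cardsDS // cardsDS //.
have hC : (#|C| <= #|A|)%N by apply: subset_leq_card.
have hE : (#|E| <= #|A :\: C|)%N by apply: subset_leq_card.
rewrite cardsDS // in hE.
have -> : (#|A| - #|E| = #|C| + (#|A| - #|C| - #|E|))%N by lia.
rewrite exprD; ring.
Qed.

End Comb.
Arguments W {R X} p A h.


Section Graph.
Variable n : nat.
Variables (E : {set 'I_n * 'I_n}) (V1 B : {set 'I_n}).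

Lemma graph_size_le S : (graph_size E S <= n + #|E|)%N.
Proof.
rewrite /graph_size; apply: leq_add.
  by rewrite -[X in (_ <= X)%N](card_ord n); apply: max_card.
by apply: subset_leq_card; apply/fintype.subsetP => e; rewrite inE => /andP[].
Qed.

Lemma run_bound fuel S :
  ((run E V1 B fuel S).1 <= fuel)%N /\
  ((run E V1 B fuel S).2 <= (run E V1 B fuel S).1 * (n + #|E|))%N.
Proof.
elim: fuel S => [|k IH] S /=; first by [].
have hg := graph_size_le S.
case: ifP => _ /=; first by split => //; rewrite mul1n.
have [h1 h2] := IH (S :\: attrP E V1 S (S :\: reachB E B S)).
split; first lia.
rewrite mulSn addnC; exact: leq_add.
Qed.

Lemma run_good : reachB E B [set: 'I_n] = [set: 'I_n] ->
  run E V1 B n.+2 [set: 'I_n] = (1, n + #|E|)%N.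
Proof.
move=> h; rewrite /= h finset.setDv eqxx /= /graph_size cardsT card_ord.
do 2 f_equal; apply: eq_card => e; rewrite !inE; by case: (e \in E).
Qed.

Lemma bad_cut : B != finset.set0 -> reachB E B [set: 'I_n] != [set: 'I_n] ->
  exists T : {set 'I_n}, [&& T != finset.set0, T != [set: 'I_n] &
     E :&: finset.setX T (~: T) == finset.set0].
Proof.
move=> /set0Pn [b bB] hR; set Z := reachB E B [set: 'I_n].
have bZ : b \in Z.
  rewrite /Z /reachB inE finset.in_setT /=; apply/existsP; exists b.
  by rewrite inE bB finset.in_setT /= connect0.
exists (~: Z); apply/and3P; split.
- apply/set0Pn; case: (pickP [pred x | x \notin Z]) => [x xZ|none].
    by exists x; rewrite inE.
  case/negP: hR; apply/eqP/setP => x; rewrite finset.in_setT.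
  by have := none x; rewrite /= => /negbFE.
- by apply/eqP => /setP /(_ b); rewrite finset.in_setC bZ finset.in_setT.
- apply/eqP/setP => [[u v]]; rewrite !inE /=; apply/negP => /and3P [uvE uZ vZ].
  move: vZ; rewrite negbK => /existsP [b' /andP [b'B cvb']].
  case/negP: uZ; apply/existsP; exists b'; rewrite b'B /=.
  apply: connect_trans cvb'; apply: connect1.
  by rewrite /sub_edge !finset.in_setT uvE.
Qed.

End Graph.


Section Pointwise.
Variable R : realType.
Variable n : nat.
Variables (V1 B : {set 'I_n}).
Hypothesis hB : B != finset.set0.

Definition ind (T : {set 'I_n}) (E : {set 'I_n * 'I_n}) : R :=
  (E :&: finset.setX T (~: T) == finset.set0)%:R.

Definition SE (E : {set 'I_n * 'I_n}) : R :=
  \sum_(T : {set 'I_n} | (T != finset.set0) && (T != [set: 'I_n])) ind T E.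

Lemma SE_ge0 E : 0 <= SE E.
Proof. by apply: sumr_ge0 => T _; rewrite /ind; case: (_ == _). Qed.

Lemma pw E :
  [/\ (buchi_iterations E V1 B)%:R <= 1 + (n.+1)%:R * SE E :> R,
      (buchi_iterations E V1 B)%:R <= (n.+2)%:R :> R,
      (buchi_work E V1 B)%:R <= (n + #|E|)%:R * (1 + (n.+1)%:R * SE E) :> R &
      (buchi_work E V1 B)%:R <= (n.+2)%:R * (n + #|E|)%:R :> R].
Proof.
have [it_le wk_le] := run_bound n E V1 B n.+2 [set: 'I_n].
rewrite /buchi_iterations /buchi_work.
set r := run E V1 B n.+2 [set: 'I_n] in it_le wk_le *.
have hS := SE_ge0 E.
have hN : 0 <= (n.+1)%:R * SE E :> R by apply: mulr_ge0.
have hw : (r.2%:R <= (n.+2)%:R * (n + #|E|)%:R :> R).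
  rewrite -natrM ler_nat; apply: (leq_trans wk_le); exact: leq_mul.
case: (eqVneq (reachB E B [set: 'I_n]) [set: 'I_n]) => h.
  have hr : r = (1, n + #|E|)%N by rewrite /r (run_good n E V1 B h).
  rewrite hr /=; split.
  - by rewrite lerDl.
  - by rewrite ler_nat.
  - by rewrite -[X in X <= _]mulr1 ler_wpM2l // lerDl.
  - by rewrite -natrM ler_nat leq_pmull.
have [T /and3P [T0 TT TE]] := bad_cut n E B hB h.
have hS1 : 1 <= SE E.
  rewrite /SE (bigD1 T) /=; last by rewrite T0 TT.
  rewrite /ind TE /= lerDl; apply: sumr_ge0 => T' _; by case: (_ == _).
have hN2 : ((n.+2)%:R <= 1 + (n.+1)%:R * SE E :> R).
  rewrite -addn1 natrD addrC lerD2l -[X in X <= _]mulr1 ler_wpM2l //.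
have hI : (r.1%:R <= 1 + (n.+1)%:R * SE E :> R).
  apply: (@le_trans _ _ (n.+2)%:R) => //; by rewrite ler_nat.
split => //.
- by rewrite ler_nat.
- apply: (le_trans hw); rewrite mulrC ler_wpM2l //.
Qed.

End Pointwise.
Arguments ind R {n}.
Arguments SE R {n}.
Arguments pw R {n} V1 {B} hB E.

Section Expect.
Variable R : realType.
Variable n : nat.
Variable p : R.
Hypotheses (p0 : 0 <= p) (p1 : p <= 1).
Variables (V1 B : {set 'I_n}).
Hypothesis hB : B != finset.set0.

Definition Q : R := \sum_(T : {set 'I_n} | (T != finset.set0) && (T != [set: 'I_n]))
   (1 - p) ^+ (#|T| * #|~: T|).

Local Notation P := (offdiag n).

Lemma gnpW (f : {set 'I_n * 'I_n} -> R) : gnp_expect p f = W p P f.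
Proof. by []. Qed.

Lemma W_const (A : {set 'I_n * 'I_n}) (k : R) : W p A (fun=> k) = k.
Proof. by rewrite -[k]mulr1 W_scale W_one. Qed.

Lemma cut_sub (T : {set 'I_n}) : finset.setX T (~: T) \subset P.
Proof.
apply/fintype.subsetP => [[u v]]; rewrite !inE /= => /andP [uT vT].
by apply/eqP => uv; rewrite -uv uT in vT.
Qed.

Lemma W_ind (T : {set 'I_n}) (g : {set 'I_n * 'I_n} -> R) : W p P (fun E => ind R T E * g E) =
  (1 - p) ^+ (#|T| * #|~: T|) * W p (P :\: finset.setX T (~: T)) g.
Proof. by rewrite /ind W_restrict ?cut_sub // cardsX. Qed.

Lemma E_card : gnp_expect p (fun E : {set 'I_n * 'I_n} => #|E|%:R) = p * #|P|%:R.
Proof. by rewrite gnpW W_card. Qed.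

Lemma E_iter1 : gnp_expect p (fun E : {set 'I_n * 'I_n} => (buchi_iterations E V1 B)%:R) <= 1 + (n.+1)%:R * Q.
Proof.
rewrite gnpW; apply: (@le_trans _ _ (W p P (fun E => 1 + (n.+1)%:R * SE R E))).
  apply: W_le => // E _; by case: (pw R V1 hB E).
rewrite W_add W_const W_scale /SE W_sum lerD2l ler_wpM2l //.
apply: ler_sum => T _.
rewrite (@W_ext _ _ p _ _ (fun E => ind R T E * 1)); last by move=> E _; rewrite mulr1.
by rewrite W_ind W_const mulr1.
Qed.

Lemma E_iter2 : gnp_expect p (fun E : {set 'I_n * 'I_n} => (buchi_iterations E V1 B)%:R) <= (n.+2)%:R.
Proof.
rewrite gnpW -[X in _ <= X](W_const P).
by apply: W_le => // E _; case: (pw R V1 hB E).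
Qed.

Lemma E_work1 : gnp_expect p (fun E : {set 'I_n * 'I_n} => (buchi_work E V1 B)%:R) <=
   (n%:R + p * #|P|%:R) * (1 + (n.+1)%:R * Q).
Proof.
rewrite gnpW; apply: (@le_trans _ _ (W p P (fun E => (n + #|E|)%:R * (1 + (n.+1)%:R * SE R E)))).
  apply: W_le => // E _; by case: (pw R V1 hB E).
have hnE : W p P (fun E => (n + #|E|)%:R) = n%:R + p * #|P|%:R.
  rewrite (@W_ext _ _ p _ _ (fun E => n%:R + #|E|%:R)); last by move=> E _; rewrite natrD.
  by rewrite W_add W_const W_card.
rewrite (@W_ext _ _ p _ _ (fun E => (n + #|E|)%:R + (n.+1)%:R *
    \sum_(T : {set 'I_n} | (T != finset.set0) && (T != [set: 'I_n])) (ind R T E * (n + #|E|)%:R))); last first.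
  move=> E _; rewrite /SE mulrDr mulr1; congr (_ + _).
  rewrite mulrCA big_distrr; congr (_ * _); apply: eq_bigr => T _; by rewrite mulrC.
rewrite W_add hnE W_scale W_sum mulrDr mulr1 lerD2l.
rewrite [X in _ <= X]mulrCA ler_wpM2l // /Q big_distrr /= ler_sum // => T _.
rewrite W_ind mulrC ler_wpM2r //; first by rewrite exprn_ge0 // subr_ge0.
rewrite (@W_ext _ _ p _ _ (fun E => n%:R + #|E|%:R)); last by move=> E _; rewrite natrD.
rewrite W_add W_const W_card lerD2l ler_wpM2l // ler_nat.
by apply: subset_leq_card; apply: finset.subsetDl.
Qed.

Lemma E_work2 : gnp_expect p (fun E : {set 'I_n * 'I_n} => (buchi_work E V1 B)%:R) <=
   (n.+2)%:R * (n%:R + p * #|P|%:R).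
Proof.
rewrite gnpW; apply: (@le_trans _ _ (W p P (fun E => (n.+2)%:R * (n + #|E|)%:R))).
  apply: W_le => // E _; by case: (pw R V1 hB E).
rewrite W_scale (@W_ext _ _ p _ _ (fun E => n%:R + #|E|%:R)); last by move=> E _; rewrite natrD.
by rewrite W_add W_const W_card.
Qed.

End Expect.



Lemma pow_le_exp (R : realType) (p : R) m : 0 <= p -> p <= 1 -> (1 - p) ^+ m <= expR (- (p * m%:R)).
Proof.
move=> p0 p1; rewrite -mulNr expRM_natr; apply: lerXn2r.
- by rewrite nnegrE subr_ge0.
- by rewrite nnegrE; apply: ltW; apply: expR_gt0.
- by have := expR_ge1Dx (- p); rewrite addrC.
Qed.

Definition eps (R : realType) (c : R) : R := (c - 2) ^+ 2 / c.
Arguments eps {R}.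

Lemma eps_gt0 (R : realType) (c : R) : 2 < c -> 0 < eps c.
Proof. move=> c2; apply: divr_gt0; last lra. by rewrite exprn_gt0 // subr_gt0. Qed.

Lemma term_bound (R : realType) (c : R) (n k j : nat) (p : R) : 2 < c -> (2 <= n)%N -> (k + j = n)%N ->
  c * ln (n%:R) / n%:R <= p -> p <= 1 ->
  (1 - p) ^+ (k * j) <= expR (- (2 * ln n%:R)) ^+ k + expR (- (2 * ln n%:R)) ^+ j
     + expR (- (eps c * ln n%:R)) ^+ n.
Proof.
move=> c2 n2 kjn hp p1.
set L := ln (n%:R : R).
have n0 : 0 < n%:R :> R by rewrite ltr0n; lia.
have L0 : 0 <= L by apply: ln_ge0; rewrite ler1n; lia.
have hkj : k%:R + j%:R = n%:R :> R by rewrite -natrD kjn.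
have k0 : 0 <= k%:R :> R by [].
have j0 : 0 <= j%:R :> R by [].
have c0 : 0 < c by lra.
set rho := c * L / n%:R.
have rho0 : 0 <= rho by rewrite /rho divr_ge0 // mulr_ge0 //; lra.
have p0 : 0 <= p by apply: le_trans hp.
have h1 : (1 - p) ^+ (k * j) <= expR (- (rho * (k%:R * j%:R))).
  apply: (le_trans (@pow_le_exp _ p (k * j) p0 p1)); rewrite ler_expR lerN2 natrM.
  by apply: ler_wpM2r => //; apply: mulr_ge0.
have y0 : forall m, 0 <= expR (- (2 * L)) ^+ m by move=> m; apply: exprn_ge0; apply: ltW; apply: expR_gt0.
have z0 : 0 <= expR (- (eps c * L)) ^+ n by apply: exprn_ge0; apply: ltW; apply: expR_gt0.
apply: (le_trans h1).
have hrho : rho * (k%:R * j%:R) = c * L * k%:R * j%:R / n%:R by rewrite /rho; field; lra.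
case: (lerP (2 * n%:R) (c * j%:R)) => hA.
  apply: (@le_trans _ _ (expR (- (2 * L)) ^+ k)); last first.
    by rewrite -addrA lerDl addr_ge0.
  rewrite -expRM_natr ler_expR mulNr lerN2 hrho.
  rewrite ler_pdivlMr //.
  have : 2 * n%:R * (L * k%:R) <= c * j%:R * (L * k%:R) by apply: ler_wpM2r => //; apply: mulr_ge0.
  lra.
case: (lerP (2 * n%:R) (c * k%:R)) => hB.
  apply: (@le_trans _ _ (expR (- (2 * L)) ^+ j)); last first.
    by rewrite addrAC lerDr addr_ge0.
  rewrite -expRM_natr ler_expR mulNr lerN2 hrho.
  rewrite ler_pdivlMr //.
  have : 2 * n%:R * (L * j%:R) <= c * k%:R * (L * j%:R) by apply: ler_wpM2r => //; apply: mulr_ge0.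
  lra.
apply: (@le_trans _ _ (expR (- (eps c * L)) ^+ n)); last by rewrite lerDr addr_ge0.
rewrite -expRM_natr ler_expR mulNr lerN2 hrho /eps.
have hc : c * k%:R + c * j%:R = c * n%:R by rewrite -mulrDr hkj.
have hk : (c - 2) * n%:R <= c * k%:R by rewrite mulrBl; lra.
have hj : (c - 2) * n%:R <= c * j%:R by rewrite mulrBl; lra.
have hm : ((c - 2) * n%:R) * ((c - 2) * n%:R) <= (c * k%:R) * (c * j%:R).
  apply: ler_pM => //; apply: mulr_ge0 => //; lra.
have e : c * L * k%:R * j%:R / n%:R - (c - 2) ^+ 2 / c * L * n%:R
   = L / (c * n%:R) * ((c * k%:R) * (c * j%:R) - ((c - 2) * n%:R) * ((c - 2) * n%:R)).
  field; lra.
rewrite -subr_ge0 e; apply: mulr_ge0; last by rewrite subr_ge0.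
by apply: divr_ge0 => //; apply: mulr_ge0; lra.
Qed.


Lemma sum_sub_le (R : realType) (I : finType) (P Q : pred I) (F : I -> R) :
  (forall i, 0 <= F i) -> \sum_(i | P i && Q i) F i <= \sum_(i | P i) F i.
Proof.
move=> F0; rewrite [X in _ <= X](bigID Q) /= lerDl; exact: sumr_ge0.
Qed.

Lemma sum_all_pow (R : realType) (n : nat) (y : R) :
  \sum_(T : {set 'I_n}) y ^+ #|T| = (1 + y) ^+ n.
Proof.
have h := @sum_pow R _ y [set: 'I_n]; rewrite powersetT cardsT card_ord in h.
rewrite -h; apply: eq_bigl => T; by rewrite finset.in_setT.
Qed.

Lemma card_sets_ord (n : nat) : #|{set 'I_n}| = (2 ^ n)%N.
Proof. by rewrite -cardsT -powersetT card_powerset cardsT card_ord. Qed.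

Lemma Q_bound (R : realType) (c : R) (n : nat) (p : R) : 2 < c -> (2 <= n)%N ->
  c * ln (n%:R) / n%:R <= p -> p <= 1 -> 3 <= eps c * ln (n%:R) ->
  1 + (n.+1)%:R * Q R n p <= 8.
Proof.
move=> c2 n2 hp p1 he.
set L := ln (n%:R : R).
rewrite -/L in he.
set y := expR (- (2 * L)); set z := expR (- (eps c * L)).
have n0 : 0 < n%:R :> R by rewrite ltr0n; lia.
have y0 : 0 <= y by apply: ltW; apply: expR_gt0.
have z0 : 0 <= z by apply: ltW; apply: expR_gt0.
have h1 : Q R n p <= \sum_(T : {set 'I_n} | (T != finset.set0) && (T != [set: 'I_n]))
     (y ^+ #|T| + y ^+ #|~: T| + z ^+ n).
  apply: ler_sum => T _; apply: term_bound => //.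
  by rewrite cardsC card_ord.
rewrite !big_split /= in h1.
have hS := @sum_all_pow R n y.
have ha : \sum_(T : {set 'I_n} | (T != finset.set0) && (T != [set: 'I_n])) y ^+ #|T| <= (1 + y) ^+ n - 1.
  apply: le_trans; first by apply: sum_sub_le => T; apply: exprn_ge0.
  rewrite -hS [X in _ <= X - _](bigD1 finset.set0) //=.
  have -> : #|(finset.set0 : {set 'I_n})| = 0%N by apply: cards0.
  by rewrite expr0 [1 + _]addrC addrK.
have hb : \sum_(T : {set 'I_n} | (T != finset.set0) && (T != [set: 'I_n])) y ^+ #|~: T| <= (1 + y) ^+ n - 1.
  rewrite (eq_bigl (fun T : {set 'I_n} => (T != [set: 'I_n]) && (T != finset.set0))); last first.
    by move=> T; rewrite andbC.
  apply: le_trans; first by apply: sum_sub_le => T; apply: exprn_ge0.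
  rewrite -hS [X in _ <= X - _](reindex_inj (@finset.setC_inj _)) /=.
  rewrite [X in _ <= X - _](bigD1 [set: 'I_n]) //= finset.setCT.
  have -> : #|(finset.set0 : {set 'I_n})| = 0%N by apply: cards0.
  by rewrite expr0 [1 + _]addrC addrK.
have hc : \sum_(T : {set 'I_n} | (T != finset.set0) && (T != [set: 'I_n])) z ^+ n <= (2 ^ n)%:R * z ^+ n.
  apply: le_trans; first by apply: (@sum_sub_le _ _ xpredT) => T; apply: exprn_ge0.
  by rewrite sumr_const card_sets_ord mulr_natl.
set u := expR (n%:R^-1 : R).
have hyn : y * n%:R = n%:R^-1.
  rewrite /y expRN expRM_natl lnK; last by rewrite posrE.
  field; lra.
have hsu : (1 + y) ^+ n <= u.
  rewrite /u -hyn expRM_natr; apply: lerXn2r.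
  - by rewrite nnegrE; lra.
  - by rewrite nnegrE; apply: ltW; apply: expR_gt0.
  - exact: expR_ge1Dx.
have u1 : 1 <= u.
  have := expR_ge1Dx (n%:R^-1 : R); rewrite -/u.
  have : 0 <= n%:R^-1 :> R by rewrite invr_ge0; lra.
  lra.
have hu2 : (n%:R - 1) * u <= n%:R.
  have h0 := expR_ge1Dx (- n%:R^-1 : R); rewrite expRN -/u in h0.
  have upos : 0 < u by apply: expR_gt0.
  have : (1 - n%:R^-1) * u <= 1.
    apply: (@le_trans _ _ (u^-1 * u)); first by apply: ler_wpM2r => //; lra.
    by rewrite mulVf // lt0r_neq0.
  move=> h; have : n%:R * ((1 - n%:R^-1) * u) <= n%:R * 1 by apply: ler_wpM2l => //; lra.
  have -> : n%:R * ((1 - n%:R^-1) * u) = (n%:R - 1) * u by field; lra.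
  by rewrite mulr1.
have n2R : 2 <= n%:R :> R by rewrite (ler_nat R 2 n).
have hA : (n.+1)%:R * ((1 + y) ^+ n - 1) <= 3.
  have k1 : 0 <= (2 * n%:R - 4) * (u - 1) by apply: mulr_ge0; lra.
  have k2 : (n.+1)%:R * ((1 + y) ^+ n - 1) <= (n.+1)%:R * (u - 1).
    by apply: ler_wpM2l => //; lra.
  rewrite -addn1 natrD in k2; nra.
have z4 : 4 * z <= 1.
  have e1 := expR_ge1Dx (eps c * L).
  have e0 : 0 < expR (eps c * L) by apply: expR_gt0.
  rewrite /z expRN ler_pdivrMr //; lra.
have hB : (n.+1)%:R * ((2 ^ n)%:R * z ^+ n) <= 1.
  have hn : (n.+1)%:R <= (2 ^ n)%:R :> R by rewrite ler_nat; apply: ltn_expl.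
  apply: (@le_trans _ _ ((2 ^ n)%:R * ((2 ^ n)%:R * z ^+ n))).
    by apply: ler_wpM2r => //; apply: mulr_ge0 => //; apply: exprn_ge0.
  rewrite natrX mulrA -exprMn -exprMn; apply: exprn_ile1; lra.
have hQ : Q R n p <= 2 * ((1 + y) ^+ n - 1) + (2 ^ n)%:R * z ^+ n by lra.
have : (n.+1)%:R * Q R n p <= (n.+1)%:R * (2 * ((1 + y) ^+ n - 1) + (2 ^ n)%:R * z ^+ n).
  by apply: ler_wpM2l.
rewrite mulrDr; lra.
Qed.


Theorem theorem2 (R : realType) (c : R) : 2 < c ->
  exists K : R, forall (n : nat) (p : R),
    c * ln (n%:R) / n%:R <= p -> p <= 1 ->
    forall V1 B : {set 'I_n}, B != finset.set0 ->
      gnp_expect p (fun E : {set 'I_n * 'I_n} => (buchi_iterations E V1 B)%:R) <= K /\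
      gnp_expect p (fun E : {set 'I_n * 'I_n} => (buchi_work E V1 B)%:R)
        <= K * (n%:R + gnp_expect p (fun E : {set 'I_n * 'I_n} => #|E|%:R)).
Proof.
move=> c2.
have e0 := @eps_gt0 R c c2.
set M := expR (3 / eps c).
have M0 : 0 <= M by apply: ltW; apply: expR_gt0.
set N0 := maxn 2 (Num.Def.archi_bound M).
exists (maxn N0.+2 8)%:R => n p hp p1 V1 B hB.
have c0 : 0 < c by lra.
have L0 : 0 <= ln (n%:R : R).
  case: n hp V1 B hB => [|n'] *; first by rewrite ln0.
  by apply: ln_ge0; rewrite ler1n.
have p0 : 0 <= p.
  apply: le_trans hp; apply: divr_ge0 => //; apply: mulr_ge0 => //; lra.
have K8 : 8 <= (maxn N0.+2 8)%:R :> R.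
  by rewrite (ler_nat R 8); apply: leq_maxr.
have KN : (N0.+2)%:R <= (maxn N0.+2 8)%:R :> R.
  by rewrite ler_nat; apply: leq_maxl.
have K0 : 0 <= (maxn N0.+2 8)%:R :> R by [].
rewrite (E_card R n p).
set S := n%:R + p * #|offdiag n|%:R.
have S0 : 0 <= S by apply: addr_ge0 => //; apply: mulr_ge0.
case: (leqP N0 n) => hn.
  have n2 : (2 <= n)%N by apply: leq_trans hn; apply: leq_maxl.
  have he : 3 <= eps c * ln (n%:R : R).
    have hM : M < n%:R.
      apply: (lt_le_trans (archi_boundP M0)); rewrite ler_nat.
      by apply: leq_trans hn; apply: leq_maxr.
    have hl : 3 / eps c <= ln (n%:R : R).
      have Mp : M \in Num.pos by rewrite posrE expR_gt0.
      have np : (n%:R : R) \in Num.pos by rewrite posrE; apply: le_lt_trans hM.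
      rewrite -(expRK (3 / eps c)) -/M ler_ln //; exact: ltW.
    have : eps c * (3 / eps c) <= eps c * ln (n%:R : R) by apply: ler_wpM2l => //; exact: ltW.
    have -> : eps c * (3 / eps c) = 3 by field; apply: lt0r_neq0.
    done.
  have hQ := @Q_bound R c n p c2 n2 hp p1 he.
  split.
    apply: (le_trans (@E_iter1 R n p p0 p1 V1 B hB)); lra.
  apply: (le_trans (@E_work1 R n p p0 p1 V1 B hB)); rewrite -/S mulrC.
  apply: ler_wpM2r => //; lra.
have hn2 : (n.+2)%:R <= (maxn N0.+2 8)%:R :> R.
  apply: le_trans KN; rewrite ler_nat; lia.
split.
  by apply: (le_trans (@E_iter2 R n p p0 p1 V1 B hB)).
apply: (le_trans (@E_work2 R n p p0 p1 V1 B hB)); rewrite -/S.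
by apply: ler_wpM2r.
Qed.
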